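(* Let $n_1,n_2$ be distinct primes and let $k>1$ be an integer with $\gcd(k,n_1)=\gcd(k,n_2)=1$, and suppose $n=n_1n_2$ is a pseudoprime of basis $k$. Then for all $r,s,q,p\in\mathbb{N}$, $$\frac{k^{\,r n_1^{q}+s n_2^{p}-(r+s)}-1}{n}\in\mathbb{N}.$$
   Context: A positive integer $n$ is called a pseudoprime of basis $k$ (where $k>1$ is an integer) if $n$ is an odd composite number, $\gcd(n,k)=1$, and $k^{n-1}\equiv 1 \pmod n$. $\mathbb{N}$ denotes the positive integers. *)

(* Defs.v *)
From mathcomp Require Import all_boot.

Definition pseudoprime (k n : nat) : Prop :=
  [/\ 1 < k, odd n, (1 < n) && ~~ prime n, coprime n k & k ^ (n - 1) = 1 %[mod n]].

(* Main.v *)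
Require Import Defs.
From mathcomp Require Import all_boot cyclic.
From mathcomp Require Import zify.
Lemma powdiv k m a b : k ^ a = 1 %[mod m] -> a %| b -> k ^ b = 1 %[mod m].
Proof. move=> H /dvdnP [c ->]; by rewrite mulnC expnM -modnXm H modnXm exp1n. Qed.

Lemma dvd_pow1 a q : (a - 1) %| a ^ q - 1.
Proof.
case: a => [|a]; first by rewrite sub0n dvd0n; case: q => //= q; rewrite exp0n.
rewrite -eqn_mod_dvd ?expn_gt0 //. 
apply/eqP; rewrite subn1 /= -modnXm -[a.+1]addn1 modnDl.
by rewrite modnXm exp1n.
Qed.

Lemma onemod a b k r s q p : prime a -> coprime k a ->
  k ^ (a * b - 1) = 1 %[mod a] -> 0 < b ->
  k ^ (r * (a ^ q - 1) + s * (b ^ p - 1)) = 1 %[mod a].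
Proof.
move=> pa ca H b0.
have Ha : k ^ (a - 1) = 1 %[mod a].
  by rewrite subn1 -(totient_prime pa) Euler_exp_totient.
have Hb : k ^ (b - 1) = 1 %[mod a].
  have E : a * b - 1 = (a - 1) * b + (b - 1).
    have a0 := prime_gt0 pa. rewrite mulnBl mul1n addnBA // mulnC subnK //.
    by rewrite leq_pmulr.
  by rewrite -H E expnD expnM -modnMml -[(k ^ (a - 1)) ^ b %% a]modnXm Ha modnXm exp1n modnMml mul1n.
have H1 : k ^ (r * (a ^ q - 1)) = 1 %[mod a].
  by apply: powdiv Ha _; apply: dvdn_mull; apply: dvd_pow1.
have H2 : k ^ (s * (b ^ p - 1)) = 1 %[mod a].
  by apply: powdiv Hb _; apply: dvdn_mull; apply: dvd_pow1.
by rewrite expnD -modnMm H1 H2 modnMm.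
Qed.

Theorem mainTheorem3 (n1 n2 k : nat) :
  prime n1 -> prime n2 -> n1 != n2 -> 1 < k ->
  coprime k n1 -> coprime k n2 ->
  pseudoprime k (n1 * n2) ->
  forall r s q p : nat, 0 < r -> 0 < s -> 0 < q -> 0 < p ->
    let e := r * n1 ^ q + s * n2 ^ p - (r + s) in
    (n1 * n2) %| k ^ e - 1 /\ 0 < (k ^ e - 1) %/ (n1 * n2).
Proof.
move=> p1 p2 ne k1 c1 c2 [_ _ _ _ Hps] r s q p r0 s0 q0 p0 e.
have k0 : 0 < k by apply: ltnW.
have n10 := prime_gt0 p1. have n20 := prime_gt0 p2.
have n11 := prime_gt1 p1.
have Hd : n1 * n2 %| k ^ (n1 * n2 - 1) - 1.
  by rewrite -eqn_mod_dvd ?expn_gt0 ?k0 //; apply/eqP.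
have X1 : 1 < n1 ^ q by apply: leq_trans (ltn_expl q n11).
have X2 : 1 <= n2 ^ p by rewrite expn_gt0 n20.
have Ee : e = r * (n1 ^ q - 1) + s * (n2 ^ p - 1).
  have := leq_pmulr r (ltnW X1). have := leq_pmulr s X2.
  rewrite /e !mulnBr !muln1.
  move: (r * n1 ^ q) (s * n2 ^ p) => A B HB HA; clear -HA HB; lia.
have M1 : k ^ e = 1 %[mod n1].
  rewrite Ee; apply: onemod => //.
  apply/eqP; rewrite eqn_mod_dvd ?expn_gt0 ?k0 //.
  by apply: dvdn_trans Hd; apply: dvdn_mulr.
have M2 : k ^ e = 1 %[mod n2].
  rewrite Ee addnC; apply: onemod => //.
  apply/eqP; rewrite eqn_mod_dvd ?expn_gt0 ?k0 // mulnC.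
  by apply: dvdn_trans Hd; apply: dvdn_mull.
have cn : coprime n1 n2 by rewrite prime_coprime // dvdn_prime2.
have D : n1 * n2 %| k ^ e - 1.
  rewrite Gauss_dvd // -!eqn_mod_dvd ?expn_gt0 ?k0 //.
  by apply/andP; split; apply/eqP.
split => //.
have e0 : 0 < e.
  rewrite Ee; apply: leq_trans (leq_addr _ _); rewrite muln_gt0 r0 subn_gt0 //.
have ke : 1 < k ^ e by apply: leq_trans (ltn_expl e k1).
rewrite divn_gt0 ?muln_gt0 ?n10 ?n20 //.
by apply: dvdn_leq => //; rewrite subn_gt0.
Qed.
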